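(* Let $b\ge 2$ and $\ell\ge 1$ be integers, $m=b^{\ell+1}$, let $S=S_\ell:(\mathbb{Z}/m\mathbb{Z})^{\times}\to\mathbb{R}$ be the collision deviation and $S^{\circ}$ its centered version (see context). Then for every Dirichlet character $\chi$ modulo $m$ that is even, i.e. $\chi(-1)=1$, \[ \hat{S}^{\circ}(\chi)=\frac{1}{\phi(m)}\sum_{a\in(\mathbb{Z}/m\mathbb{Z})^{\times}} S^{\circ}(a)\,\overline{\chi}(a)=0 . \]
   Context: The collision deviation $S_\ell(p)$ is a real-valued invariant of primes $p$ with $\gcd(p,b)=1$, introduced in a companion paper; it depends only on $p\bmod m$, $m=b^{\ell+1}$, so it is regarded as a function $S$ on $(\mathbb{Z}/m\mathbb{Z})^{\times}$. It satisfies the reflection identity $S(a)+S(m-a)=-1$ for every unit $a$ mod $m$ (established in the companion paper, taken as given). For a unit $a$ mod $m$, its spectral class is $R(a)=(a-1)\bmod b\in\{0,\dots,b-1\}$ (well defined since $b\mid m$). For each spectral class $R$ attained by some unit, $\overline{S}_R$ denotes the average of $S$ over all units $a\in(\mathbb{Z}/m\mathbb{Z})^{\times}$ with $R(a)=R$. The centered collision deviation is $S^{\circ}(a)=S(a)-\overline{S}_{R(a)}$, and its transform is $\hat{S}^{\circ}(\chi)=\frac{1}{\phi(m)}\sum_a S^{\circ}(a)\overline{\chi}(a)$. *)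

(* Defs.v *)
From HB Require Import structures.
From mathcomp Require Import all_boot all_order all_algebra.
From mathcomp Require Import complex.
Set Implicit Arguments. Unset Strict Implicit. Unset Printing Implicit Defensive.
Import Order.TTheory GRing.Theory Num.Theory.
Local Open Scope ring_scope.

(* Residues mod m are represented by naturals 0 <= a < m; the units of
   Z/mZ are the a < m with coprime a m. *)

(* spectral class R(a) = (a - 1) mod b  (a >= 1 for every unit since m >= 2) *)
Definition spec_class (b a : nat) : nat := ((a - 1) %% b)%N.

Definition Sbar (R : rcfType) (S : nat -> R) (b m r : nat) : R :=
  (\sum_(a < m | coprime a m && (spec_class b a == r)) S a)
  / (#|[set a : 'I_m | coprime a m && (spec_class b a == r)]|)%:R.

Definition Scirc (R : rcfType) (S : nat -> R) (b m a : nat) : R :=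
  S a - Sbar S b m (spec_class b a).

Definition dirichlet_char (C : nzRingType) (m : nat) (chi : nat -> C) : Prop :=
  [/\ forall n, chi (n + m)%N = chi n,
      forall x y, chi (x * y)%N = chi x * chi y,
      chi 1%N = 1
    & forall n, chi n = 0 <-> ~~ coprime n m].

Definition Scirc_hat (R : rcfType) (S : nat -> R) (b m : nat)
    (chi : nat -> R[i]) : R[i] :=
  ((totient m)%:R)^-1 *
  \sum_(a < m | coprime a m) (((Scirc S b m a)%:C)%C * Num.conj (chi a)).

(* Main.v *)
Require Import Defs.
From HB Require Import structures.
From mathcomp Require Import all_boot all_order all_algebra.
From mathcomp Require Import complex.
From mathcomp Require Import zify ring.
Import Order.TTheory GRing.Theory Num.Theory.
Local Open Scope ring_scope.

Definition flip {m : nat} (hm : (0 < m)%N) (a : 'I_m) : 'I_m :=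
  Ordinal (ltn_pmod (m - a) hm).

Lemma flip_val {m : nat} (hm : (0 < m)%N) (a : 'I_m) :
  (0 < a)%N -> val (flip hm a) = (m - a)%N.
Proof. move=> a0 /=; rewrite modn_small //; have := ltn_ord a; lia. Qed.

Lemma flipK {m : nat} (hm : (0 < m)%N) : involutive (flip hm).
Proof.
move=> a; apply: val_inj => /=.
case: a => a ha /=.
have [->|a0] := posnP a.
  by rewrite subn0 modnn subn0 modnn.
rewrite (modn_small (m := (m - a)%N)); last lia.
rewrite subKn ?modn_small //; lia.
Qed.

Lemma coprime_sub (m a : nat) : (a <= m)%N -> coprime (m - a) m = coprime a m.
Proof.
move=> am; rewrite /coprime.
have e1 : gcdn (m - a) m = gcdn (m - a) ((m - a) + a) by rewrite subnK.
have e2 : gcdn a m = gcdn a ((m - a) + a) by rewrite subnK.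
by rewrite e1 e2 gcdnDl gcdnDr gcdnC.
Qed.

Lemma class_flip (b m y a : nat) : (0 < y)%N -> (y < m)%N -> (0 < a)%N -> (a < m)%N ->
  (spec_class b (m - y) == spec_class b (m - a)) = (spec_class b y == spec_class b a).
Proof.
move=> y0 ym a0 am; rewrite /spec_class.
change ((m - y - 1 == m - a - 1 %[mod b]) = (y - 1 == a - 1 %[mod b]))%N.
rewrite -(eqn_modDr (a - 1)).
have -> : (m - a - 1 + (a - 1) = m - y - 1 + (y - 1))%N by lia.
by rewrite eqn_modDl.
Qed.



Lemma chi_flip (R : rcfType) (m : nat) (chi : nat -> R[i])
  (hchi : dirichlet_char m chi) (heven : chi (m - 1)%N = 1) (a : nat) :
  (0 < a)%N -> (a < m)%N -> chi (m - a)%N = chi a.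
Proof.
case: hchi => hp hM h1 h0 a0 am.
have per : forall k n, chi (n + k * m)%N = chi n.
  elim=> [|k IH] n; first by rewrite mul0n addn0.
  by rewrite mulSn addnCA addnC hp IH.
rewrite -(per (a - 1)%N (m - a)%N).
have -> : ((m - a) + (a - 1) * m = (m - 1) * a)%N by nia.
by rewrite hM heven mul1r.
Qed.

Lemma reflect_big (T : Type) (idx : T) (op : Monoid.com_law idx) (m : nat)
  (hm : (1 < m)%N) (b : nat) (a : 'I_m) (ha : (0 < a)%N) (F : 'I_m -> T) :
  \big[op/idx]_(x < m | coprime x m && (spec_class b x == spec_class b (m - a))) F x
  = \big[op/idx]_(x < m | coprime x m && (spec_class b x == spec_class b a))
      F (flip (ltnW hm) x).
Proof.
rewrite [LHS](reindex_inj (inv_inj (flipK (ltnW hm)))).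
apply: eq_bigl => x.
have [x0|x0] := posnP x.
  have -> : flip (ltnW hm) x = x.
    by apply: val_inj => /=; rewrite x0 subn0 modnn.
  rewrite x0 /coprime gcd0n.
  by have -> : (m == 1)%N = false by apply/eqP; lia.
rewrite flip_val // coprime_sub; last by have := ltn_ord x; lia.
rewrite class_flip //; have := ltn_ord a; lia.
Qed.

Lemma Scirc_flip (R : rcfType) (S : nat -> R) (b m : nat) (hm : (1 < m)%N)
  (hrefl : forall a : nat, (a < m)%N -> coprime a m -> S a + S (m - a)%N = -1)
  (a : 'I_m) (ha : coprime a m) :
  Scirc S b m (m - a) = - Scirc S b m a.
Proof.
have a0 : (0 < a)%N.
  case: (posnP a) => // a0; move: ha; rewrite a0 /coprime gcd0n => /eqP; lia.
have cardR : forall r, (#|[set x : 'I_m | coprime x m && (spec_class b x == r)]|)%:R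
   = \sum_(x < m | coprime x m && (spec_class b x == r)) (1 : R).
  move=> r; rewrite -sum1_card natr_sum; apply: eq_bigl => x; by rewrite inE.
rewrite /Scirc /Sbar !cardR.
set ra := spec_class b a.
set Sa := \sum_(x < m | _ && (_ == ra)) S x.
set Na := \sum_(x < m | _ && (_ == ra)) (1 : R).
have Na0 : Na != 0.
  rewrite /Na -cardR pnatr_eq0 -lt0n card_gt0; apply/set0Pn; exists a.
  by rewrite inE ha eqxx.
rewrite (reflect_big _ _ _ _ hm b a a0 (fun x => S (val x))).
rewrite (reflect_big _ _ _ _ hm b a a0 (fun x => (1 : R))).
have -> : \sum_(x < m | coprime x m && (spec_class b x == ra)) S (flip (ltnW hm) x)
    = \sum_(x < m | coprime x m && (spec_class b x == ra)) (-1 - S x).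
  apply: eq_bigr => x /andP [hx _].
  have x0 : (0 < x)%N.
    case: (posnP x) => // x0; move: hx; rewrite x0 /coprime gcd0n => /eqP; lia.
  rewrite flip_val //; have := hrefl x (ltn_ord x) hx; move=> h.
  by rewrite -h addrC addKr.
rewrite sumrB sumrN -/Na -/Sa.
have h := hrefl a (ltn_ord a) ha.
have -> : S (m - a)%N = -1 - S a by rewrite -h addrC addKr.
by field.
Qed.

Theorem mainTheorem2 (R : rcfType) (b l : nat) (S : nat -> R)
  (hb : (2 <= b)%N) (hl : (1 <= l)%N)
  (hrefl : forall a : nat, (a < b ^ l.+1)%N -> coprime a (b ^ l.+1) ->
             S a + S (b ^ l.+1 - a)%N = -1)
  (chi : nat -> R[i])
  (hchi : dirichlet_char (b ^ l.+1) chi)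
  (heven : chi (b ^ l.+1 - 1)%N = 1) :
  Scirc_hat S b (b ^ l.+1) chi = 0.
Proof.
rewrite /Scirc_hat.
move: hrefl hchi heven.
have hm : (1 < b ^ l.+1)%N.
  rewrite expnS; apply: (leq_trans hb); apply: leq_pmulr; rewrite expn_gt0; lia.
move: hm.
set m := (b ^ l.+1)%N => hm hrefl hchi heven.
set T := \sum_(a < m | coprime a m) _.
suff T0 : T = 0 by rewrite T0 mulr0.
have : T = - T.
  rewrite {1}/T -sumrN [LHS](reindex_inj (inv_inj (flipK (ltnW hm)))).
  apply: eq_big => x.
    have [x0|x0] := posnP x.
      have -> : flip (ltnW hm) x = x.
        by apply: val_inj => /=; rewrite x0 subn0 modnn.
      by [].
    by rewrite flip_val // coprime_sub //; have := ltn_ord x; lia.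
  move=> hx.
  have [x0'|x0] := posnP x.
    have ex : flip (ltnW hm) x = x.
      by apply: val_inj => /=; rewrite x0' subn0 modnn.
    by move: hx; rewrite ex x0' /coprime gcd0n => /eqP; lia.
  move: hx; rewrite flip_val // coprime_sub; last by have := ltn_ord x; lia.
  move=> hx.
  rewrite (Scirc_flip _ _ _ _ hm hrefl x hx).
  rewrite (chi_flip _ _ _ hchi heven x x0 (ltn_ord x)).
  by rewrite rmorphN mulNr.
move/eqP; rewrite -addr_eq0 -mulr2n mulrn_eq0 /=.
by move/eqP.
Qed.
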